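(* Let $\mathbb{K}$ be a field of characteristic $0$. Suppose $H^*$ is a $2n$-dimensional Poincaré graded (commutative) algebra over $\mathbb{K}$ with $H^0=\mathbb{K}$, and $H^i$ is nontrivial only when $i$ is even and $0\le i\le 2n$. If the multiplication map $H^i\otimes H^j\to H^{i+j}$ is injective for all $i,j\le n$, then $H^*\cong\mathbb{K}[x]/(x^p)$ is a quotient of the polynomial ring in a single (homogeneous) variable.
   Context: A finite-dimensional graded commutative algebra $H$ is $m$-dimensional Poincaré if there exists $\alpha_H\in(H^m)^\vee$ such that $H^i\to(H^{m-i})^\vee$, $x\mapsto(y\mapsto\alpha_H(xy))$, is an isomorphism for all $i$. *)

(* Defs.v *)
From HB Require Import structures.
From mathcomp Require Import all_boot all_order all_algebra falgebra.
Set Implicit Arguments. Unset Strict Implicit. Unset Printing Implicit Defensive.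
Import GRing.Theory.
Local Open Scope ring_scope.

(* A graded K-algebra is modelled as a finite-dimensional K-algebra A
   (falgType K) together with a family of subspaces H i (the degree-i part). *)

Definition graded_by (K : fieldType) (A : falgType K)
    (H : nat -> {vspace A}) (m : nat) : Prop :=
  [/\ (\sum_(i < m.+1) H i)%VS = fullv,
      directv (\sum_(i < m.+1) H i),
      (forall i, (m < i)%N -> H i = 0%VS),
      (forall i j, (H i * H j <= H (i + j)%N)%VS) &
      (1 \in H 0)].

Definition graded_commutative (K : fieldType) (A : falgType K)
    (H : nat -> {vspace A}) : Prop :=
  forall i j (x y : A), x \in H i -> y \in H j ->
    x * y = (-1) ^+ (i * j) * (y * x).

(* m-dimensional Poincare: there is alpha in (H^m)^dual such that for all
   i <= m, x |-> (y |-> alpha (x y)) : H^i -> (H^(m-i))^dual is an isomorphism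
   (injective and surjective).  alpha is given as a functional on A; only its
   restriction to H^m is ever used. *)
Definition poincare (K : fieldType) (A : falgType K)
    (H : nat -> {vspace A}) (m : nat) : Prop :=
  exists alpha : 'Hom(A, K^o),
    forall i, (i <= m)%N ->
      (forall x, x \in H i ->
         (forall y, y \in H (m - i)%N -> alpha (x * y) = 0) -> x = 0)
      /\ (forall phi : 'Hom(subvs_of (H (m - i)%N), K^o),
            exists2 x, x \in H i &
              forall y : subvs_of (H (m - i)%N), alpha (x * vsval y) = phi y).

(* U (x) V is identified with coefficient matrices w.r.t. the basis
   (e_a (x) f_b) built from the bases e = vbasis U and f = vbasis V. *)
Definition mul_tensor_injective (K : fieldType) (A : falgType K)
    (U V : {vspace A}) : Prop :=
  forall M : 'M[K]_(\dim U, \dim V),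
    \sum_(a < \dim U) \sum_(b < \dim V)
        M a b *: (tnth (vbasis U) a * tnth (vbasis V) b) = 0 ->
    M = 0.

(* Main.v *)
Require Import Defs.
From HB Require Import structures.
From mathcomp Require Import all_boot all_order all_algebra falgebra.
From mathcomp Require Import zify.
Set Implicit Arguments. Unset Strict Implicit. Unset Printing Implicit Defensive.
Import GRing.Theory.
Lemma comb (n : nat) (P : nat -> bool) :
  P 0 -> (forall e, P e -> e <= 2 * n) ->
  (forall a b, a <= n -> b <= n -> P a -> P b -> P (a + b)) ->
  (forall e, e <= 2 * n -> P e -> P (2 * n - e)) ->
  exists2 k, 0 < k & forall e, P e = (e <= 2 * n) && (k %| e).
Proof.
move=> P0 Pb Padd Psym.
have Psub : forall c a, n <= c -> P c -> a <= n -> a <= c -> P a -> P (c - a).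
  move=> c a hc Pc ha hac Pa.
  have c2 := Pb _ Pc.
  have h1 : P (2 * n - c) by apply: Psym.
  have h2 : P (2 * n - c + a) by apply: Padd => //; lia.
  have := Psym _ (Pb _ h2) h2.
  by have -> : 2 * n - (2 * n - c + a) = c - a by lia.
case: (posnP n) => [n0|npos].
  exists 1 => // e; rewrite dvd1n andbT.
  apply/idP/idP => [/Pb //|]; rewrite n0 leqn0 => /eqP ->; exact: P0.
have P2n : P (2 * n) by have := Psym 0 (leq0n _) P0; rewrite subn0.
have exP : exists k, (0 < k) && P k by exists (2 * n); rewrite P2n andbT; lia.
pose k := ex_minn exP.
have [kpos Pk] : 0 < k /\ P k.
  by rewrite /k; case: ex_minnP => m /andP[].
have kmin : forall e, 0 < e -> e < k -> ~~ P e.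
  move=> e e0 ek; apply/negP => Pe.
  move: ek; rewrite /k; case: ex_minnP => m _ /(_ e); rewrite e0 Pe => /(_ isT).
  lia.
exists k => //.
have PA : forall j, j * k <= n -> P (j * k).
  elim=> [|j IH] h; first by rewrite mul0n.
  rewrite mulSn in h *; apply: Padd => //; try lia.
  all: try by apply: IH; lia.
have PB : forall e, P e -> forall i, e + i * k <= n -> P (e + i * k).
  move=> e Pe; elim=> [|i IH] h; first by rewrite mul0n addn0.
  rewrite mulSn in h.
  have -> : e + i.+1 * k = k + (e + i * k) by rewrite mulSn; lia.
  apply: Padd => //; try lia.
  all: try by apply: IH; lia.
have low : forall e, e <= n -> P e -> k %| e.
  move=> e en Pe.
  case: (ltnP n k) => [nk|kn].
    case: (posnP e) => [-> //|e0].
    by move: (kmin e e0 (leq_ltn_trans en nk)); rewrite Pe.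
  apply/negPn/negP => nde.
  pose J := (n %/ k) * k.
  have PJ : P J by apply: PA; rewrite /J leq_divM.
  pose i := (n - e) %/ k.
  pose g := e + i * k.
  have Pg : P g by apply: PB => //; rewrite /g /i; have := leq_divM (n - e) k; lia.
  have Jn : J <= n by rewrite /J leq_divM.
  have gn : g <= n by rewrite /g /i; have := leq_divM (n - e) k; lia.
  have nJ : n < J + k.
    rewrite /J; have := ltn_ceil n kpos. by rewrite -mulSnr mulSn addnC.
  have ng : n < g + k.
    rewrite /g /i; have := ltn_ceil (n - e) kpos. rewrite mulSnr; lia.
  have gJ : g != J.
    apply/negP => /eqP gJ; move: nde; apply/negP/negPn.
    have : k %| g by rewrite gJ /J dvdn_mull.
    by rewrite /g dvdn_addl // dvdn_mull.
  case: (ltngtP g J) gJ => // [gltJ|Jltg] _.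
    have Pgk : P (g + k) by apply: Padd => //; lia.
    have := Psub (g + k) J (ltnW ng) Pgk Jn ltac:(lia) PJ.
    by apply/negP/kmin; lia.
  have PJk : P (J + k) by apply: Padd => //; lia.
  have := Psub (J + k) g (ltnW nJ) PJk gn ltac:(lia) Pg.
  by apply/negP/kmin; lia.
have fwd : forall e, P e -> k %| e.
  elim/ltn_ind=> e IH Pe.
  case: (leqP e n) => [en|ne]; first exact: low.
  case: (ltnP n k) => [nk|kn].
    have P2 := Psym _ (Pb _ Pe) Pe.
    have P2k := Psym _ (Pb _ Pk) Pk.
    have e2 : 2 * n - e = 0.
      case: (posnP (2 * n - e)) => // h.
      by move: (kmin _ h ltac:(lia)); rewrite P2.
    have k2 : 2 * n - k = 0.
      case: (posnP (2 * n - k)) => // h.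
      by move: (kmin _ h ltac:(lia)); rewrite P2k.
    have := Pb _ Pe; have := Pb _ Pk => h1 h2.
    by have -> : e = k by lia.
  have Pek : P (e - k) by apply: Psub => //; lia.
  have := IH (e - k) ltac:(lia) Pek.
  move=> h; have -> : e = (e - k) + k by lia.
  by rewrite dvdn_addl.
move=> e; apply/idP/idP => [Pe|/andP[e2 ke]].
  by rewrite Pb //= fwd.
have k2 : k %| 2 * n by apply: fwd.
case: (leqP e n) => [en|ne].
  by move: ke en => /dvdnP[j ->] en; apply: PA.
have h : P (2 * n - e).
  move: (dvdn_sub k2 ke) => /dvdnP[j hj].
  by rewrite hj; apply: PA; lia.
by have := Psym _ (Pb _ h) h; have -> : 2 * n - (2 * n - e) = e by lia.
Qed.

Local Open Scope ring_scope.

Lemma mulnz (K : fieldType) (A : falgType K) (U V : {vspace A}) (u v : A) :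
  mul_tensor_injective U V -> u \in U -> v \in V -> u != 0 -> v != 0 ->
  u * v != 0.
Proof.
move=> hinj Uu Vv u0 v0; apply/negP => /eqP uv0.
pose M : 'M[K]_(\dim U, \dim V) :=
  \matrix_(a, b) (coord (vbasis U) a u * coord (vbasis V) b v).
have E : \sum_(a < \dim U) \sum_(b < \dim V)
        M a b *: (tnth (vbasis U) a * tnth (vbasis V) b) = u * v.
  rewrite [in RHS](coord_vbasis Uu) [in RHS](coord_vbasis Vv) mulr_suml.
  apply: eq_bigr => a _; rewrite mulr_sumr; apply: eq_bigr => b _.
  by rewrite mxE -scalerAl -scalerAr scalerA !(tnth_nth 0).
have M0 : M = 0 by apply: hinj; rewrite E uv0.
case/boolP: [exists a, coord (vbasis U) a u != 0] => [/existsP[a ha]|/existsPn h].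
  case/boolP: [exists b, coord (vbasis V) b v != 0] => [/existsP[b hb]|/existsPn h].
    have := congr1 (fun M : 'M[K]_(_, _) => M a b) M0.
    by rewrite !mxE => /eqP; rewrite mulf_eq0 (negbTE ha) (negbTE hb).
  move: v0; rewrite (coord_vbasis Vv) big1 ?eqxx // => b _.
  by move: (h b); rewrite negbK => /eqP ->; rewrite scale0r.
move: u0; rewrite (coord_vbasis Uu) big1 ?eqxx // => a _.
by move: (h a); rewrite negbK => /eqP ->; rewrite scale0r.
Qed.

Lemma sum_delta (K : fieldType) (A : falgType K) (m p : nat) (i : 'I_m) (j : 'I_p)
  (F : 'I_m -> 'I_p -> A) :
  \sum_a \sum_b (((a == i) && (b == j))%:R : K) *: F a b = F i j.
Proof.
rewrite (bigD1 i) //= [X in _ + X]big1 => [|a ai]; last first.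
  by rewrite big1 // => b _; rewrite (negbTE ai) /= scale0r.
rewrite addr0 (bigD1 j) //= [X in _ + X]big1 => [|b bj]; last by rewrite eqxx (negbTE bj) /= scale0r.
by rewrite !eqxx /= scale1r !addr0.
Qed.

Lemma dimle1 (K : fieldType) (A : falgType K) (U : {vspace A}) :
  (forall u v, u \in U -> v \in U -> u * v = v * u) ->
  mul_tensor_injective U U -> (\dim U <= 1)%N.
Proof.
move=> hc hinj; rewrite leqNgt; apply/negP => h2.
pose i0 : 'I_(\dim U) := Ordinal (ltnW h2).
pose i1 : 'I_(\dim U) := Ordinal h2.
pose M : 'M[K]_(\dim U, \dim U) := delta_mx i0 i1 - delta_mx i1 i0.
have : M = 0.
  apply: hinj.
  rewrite /M.
  under eq_bigr => a _ do under eq_bigr => b _ do rewrite !mxE scalerBl.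
  under eq_bigr => a _ do rewrite sumrB.
  rewrite sumrB !sum_delta hc ?subrr //; exact: vbasis_mem (mem_tnth _ _).
move/(congr1 (fun M : 'M[K]_(_, _) => M i0 i1)); rewrite !mxE /=.
by rewrite subr0 => /eqP; rewrite oner_eq0.
Qed.

Lemma line_of (K : fieldType) (A : falgType K) (U : {vspace A}) (v : A) :
  (\dim U <= 1)%N -> v \in U -> v != 0 -> U = <[v]>%VS.
Proof.
move=> hd vU v0; apply/eqP; rewrite eq_sym eqEdim dim_vline v0 hd andbT.
by rewrite -memvE.
Qed.

Lemma dimle1_dual (K : fieldType) (A : falgType K) (alpha : 'Hom(A, K^o))
  (U V : {vspace A}) :
  (forall x, x \in U -> (forall y, y \in V -> alpha (x * y) = 0) -> x = 0) ->
  (\dim V <= 1)%N -> (\dim U <= 1)%N.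
Proof.
move=> hnd hV.
pose w := vpick U.
suff sU : (U <= <[w]>)%VS by apply: leq_trans (dimvS sU) _; rewrite dim_vline leq_b1.
apply/subvP => u uU.
case: (eqVneq V 0%VS) => [V0|Vn0].
  have -> : u = 0; last exact: mem0v.
  apply: hnd => // y; rewrite V0 memv0 => /eqP ->.
  by rewrite mulr0 linear0.
have z0 : vpick V != 0 by rewrite vpick0.
have Vz := line_of hV (memv_pick V) z0.
set z := vpick V in z0 Vz.
have hlin : forall x, (forall c : K, alpha (x * (c *: z)) = c * alpha (x * z)).
  by move=> x c; rewrite -scalerAr linearZ.
case: (eqVneq (alpha (w * z)) 0) => [wz0|wzn0].
  have w0 : w = 0.
    apply: hnd; first exact: memv_pick.
    by move=> y; rewrite Vz => /vlineP[c ->]; rewrite hlin wz0 mulr0.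
  by move: w0 => /eqP; rewrite vpick0 => /eqP U0; move: uU; rewrite U0 memv0 => /eqP ->; exact: mem0v.
have v0 : alpha (w * z) *: u - alpha (u * z) *: w = 0.
  apply: hnd.
    by rewrite rpredB // rpredZ // memv_pick.
  move=> y; rewrite Vz => /vlineP[c ->]; rewrite hlin.
  rewrite mulrBl -!scalerAl linearB !linearZ /=.
  by rewrite scalerN /GRing.scale /= [X in X - _]mulrC subrr mulr0.
apply/vlineP; exists (alpha (u * z) / alpha (w * z)).
move/eqP: v0; rewrite subr_eq0 => /eqP/(congr1 (fun t => (alpha (w * z))^-1 *: t)).
by rewrite !scalerA mulVf // scale1r mulrC.
Qed.

Theorem lemma3p8 (K : fieldType) (A : falgType K) (n : nat)
    (H : nat -> {vspace A}) :
  [pchar K] =i pred0 ->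
  graded_by H (2 * n) ->
  graded_commutative H ->
  poincare H (2 * n) ->
  H 0 = (<[1]>)%VS ->
  (forall i, odd i -> H i = 0%VS) ->
  (forall i j, (i <= n)%N -> (j <= n)%N -> mul_tensor_injective (H i) (H j)) ->
  exists (d p : nat) (x : A),
    [/\ (0 < d)%N, x \in H d,
        (forall a : A, exists q : {poly K}, a = (map_poly (in_alg A) q).[x]) &
        (forall q : {poly K}, (map_poly (in_alg A) q).[x] = 0 <-> ('X^p %| q)%R)].
Proof.
move=> hchar [hsum hdir hzero hmul h1] hcomm [alpha hP] H0 hodd hinj.
have oneA : (1 : A) != 0 := oner_neq0 _.
have nzP : forall e (v : A), v \in H e -> v != 0 -> H e != 0%VS.
  move=> e v ve v0; apply/eqP => he; move: ve; rewrite he memv0.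
  by rewrite (negbTE v0).
have Hb : forall e, H e != 0%VS -> (e <= 2 * n)%N.
  move=> e he; rewrite leqNgt; apply/negP => /hzero he'.
  by rewrite he' eqxx in he.
have P0 : H 0 != 0%VS by apply: (nzP 0 1).
have Padd : forall a b, (a <= n)%N -> (b <= n)%N -> H a != 0%VS -> H b != 0%VS ->
    H (a + b)%N != 0%VS.
  move=> a b an bn ha hb.
  apply: (nzP _ (vpick (H a) * vpick (H b))).
    by apply: (subvP (hmul a b)); apply: memv_mul; exact: memv_pick.
  by apply: (mulnz (hinj a b an bn)); rewrite ?memv_pick ?vpick0.
have Psym : forall e, (e <= 2 * n)%N -> H e != 0%VS -> H (2 * n - e)%N != 0%VS.
  move=> e he ne; apply/negP => /eqP h0.
  have : vpick (H e) = 0.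
    apply: (hP e he).1; first exact: memv_pick.
    by move=> y; rewrite h0 memv0 => /eqP ->; rewrite mulr0 linear0.
  by move/eqP; rewrite vpick0 (negbTE ne).
have [k kpos hk] := @comb n (fun e => H e != 0%VS) P0 Hb Padd Psym.
have dimlow : forall e, (e <= n)%N -> (\dim (H e) <= 1)%N.
  move=> e en; case/boolP: (odd e) => oe; first by rewrite hodd // dimv0.
  apply: dimle1 (hinj e e en en) => u v hu hv; rewrite (hcomm e e u v hu hv).
  have -> : (-1) ^+ (e * e) = 1 :> A.
    by rewrite -signr_odd oddM (negbTE oe) expr0.
  by rewrite mul1r.
have dimall : forall e, (\dim (H e) <= 1)%N.
  move=> e; case: (leqP e n) => [en|ne]; first exact: dimlow.
  case: (leqP e (2 * n)) => [e2|e2]; last by rewrite hzero // dimv0.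
  apply: (dimle1_dual (hP e e2).1); apply: dimlow; lia.
have P2 : H (2 * n)%N != 0%VS by have := Psym 0%N (leq0n _) P0; rewrite subn0.
have k2 : (k %| 2 * n)%N by move: (hk (2 * n)%N); rewrite P2 => /esym/andP[_ ->].
set N := ((2 * n) %/ k)%N.
have Nk : (N * k = 2 * n)%N by rewrite divnK.
pose x := vpick (H k).
have xk : x \in H k := memv_pick _.
have xpow : forall j, x ^+ j \in H (j * k)%N.
  elim=> [|j IH]; first by rewrite expr0 mul0n.
  by rewrite exprSr mulSnr; apply: (subvP (hmul _ _)); exact: memv_mul.
have xbig : forall j, (N < j)%N -> x ^+ j = 0.
  move=> j jN; apply/eqP; rewrite -memv0 -(hzero (j * k)%N); first exact: xpow.
  by rewrite -Nk ltn_pmul2r.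
have xnz : forall j, (j <= N)%N -> x ^+ j != 0.
  elim/ltn_ind => j IH jN.
  case: j IH jN => [|j] IH jN; first by rewrite expr0.
  have kle : (k <= 2 * n)%N by rewrite -Nk leq_pmull //; lia.
  have x0 : x != 0.
    by rewrite vpick0 hk dvdnn andbT.
  case: (posnP j) => [j0|jpos]; first by rewrite j0 expr1.
  case: (leqP (j * k) n) => [jn|jn].
    have kn : (k <= n)%N by apply: leq_trans jn; rewrite leq_pmull.
    rewrite exprSr; apply: (mulnz (hinj (j * k)%N k jn kn)) => //.
    by apply: IH => //; lia.
  set m := (N - j.+1)%N.
  have jkN : (j * k <= 2 * n)%N by rewrite -Nk leq_mul2r; apply/orP; right; lia.
  have hlt : ((N - j) * k < j * k)%N by rewrite mulnBl Nk; lia.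
  rewrite ltn_pmul2r // in hlt.
  have xm1 : x ^+ m.+1 != 0 by apply: IH; lia.
  have deg : (m.+1 * k = 2 * n - j * k)%N.
    by rewrite (_ : m.+1 = N - j)%N ?mulnBl ?Nk //; lia.
  have Hline : H (2 * n - j * k)%N = <[x ^+ m.+1]>%VS.
    by rewrite -deg; apply: line_of (dimall _) (xpow _) xm1.
  apply/negP => /eqP xj0.
  have : x ^+ j = 0.
    apply: (hP (j * k)%N jkN).1; first exact: xpow.
    move=> y; rewrite Hline => /vlineP[c ->].
    rewrite -scalerAr -exprD.
    have -> : x ^+ (j + m.+1) = 0 by rewrite addnS -addSn exprD xj0 mul0r.
    by rewrite scaler0 linear0.
  by move=> xj; move: (IH j (ltnSn j) (ltnW jN)); rewrite xj eqxx.
pose X := [tuple x ^+ i | i < N.+1].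
have Hdeg : forall e, (H e <= <<X>>)%VS.
  move=> e; case/boolP: (H e == 0%VS) => [/eqP->|ne]; first exact: sub0v.
  have := hk e; rewrite ne => /esym/andP[e2 /dvdnP[j ej]].
  have jN : (j <= N)%N by rewrite -(leq_pmul2r kpos) Nk -ej.
  rewrite ej (line_of (dimall _) (xpow j) (xnz j jN)) -memvE; apply: memv_span.
  have jlt : (j < N.+1)%N by [].
  by have := mem_tnth (Ordinal jlt) X; rewrite tnth_mktuple.
have ev : forall q : {poly K},
    (map_poly (in_alg A) q).[x] = \sum_(i < N.+1) q`_i *: x ^+ i.
  move=> q.
  rewrite (horner_coef_wide _ (leq_addr N.+1 (size (map_poly (in_alg A) q)))).
  rewrite [RHS](big_ord_widen _ (fun i => q`_i *: x ^+ i)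
    (leq_addl (size (map_poly (in_alg A) q)) N.+1)) [RHS]big_mkcond /=.
  apply: eq_bigr => i _; rewrite coef_map /= mulr_algl.
  case: ifP => // /negbT; rewrite -leqNgt => hi.
  by rewrite xbig ?scaler0.
have indep : forall c : nat -> K, \sum_(i < N.+1) c i *: x ^+ i = 0 ->
    forall i, (i < N.+1)%N -> c i = 0.
  move=> c hs i hi; apply/eqP; apply/negPn/negP => ci.
  have ex : exists i, (i < N.+1)%N && (c i != 0) by exists i; rewrite hi ci.
  case: (ex_minnP ex) => i0 /andP[i0N ci0] i0min.
  have := congr1 (fun t => t * x ^+ (N - i0)) hs; rewrite mul0r mulr_suml.
  rewrite (bigD1 (Ordinal i0N)) //= big1 ?addr0.
    rewrite -scalerAl -exprD subnKC; last by lia.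
    by move/eqP; rewrite scaler_eq0 (negbTE ci0) (negbTE (xnz N (leqnn N))).
  move=> j hj.
  have hj' : (j : nat) != i0.
    by apply: contra hj => /eqP h; apply/eqP/val_inj.
  case: (ltnP j i0) => [ji|ij].
    have : c j == 0.
      apply/negPn/negP => cj; have := i0min j; rewrite ltn_ord cj => /(_ isT).
      by lia.
    by move/eqP->; rewrite scale0r mul0r.
  rewrite -scalerAl -exprD xbig ?scaler0 //.
  have := ltn_ord j; lia.
have dvdX : forall q : {poly K},
    ('X^(N.+1) %| q)%R <-> (forall i, (i < N.+1)%N -> q`_i = 0).
  move=> q; split.
    by move/dvdpP => [r ->] i hi; rewrite coefMXn hi.
  move=> h; rewrite -(poly_take_drop N.+1 q).
  have -> : take_poly N.+1 q = 0.
    apply/polyP => i; rewrite coef_take_poly coef0.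
    by case: ifP => // /h.
  by rewrite add0r dvdp_mulIr.
exists k, N.+1, x; split => //.
  move=> a.
  have aX : a \in <<X>>%VS.
    have : (fullv <= <<X>>)%VS.
      by rewrite -hsum; apply/subv_sumP => i _; exact: Hdeg.
    by move/subvP; apply; exact: memvf.
  exists (\poly_(i < N.+1) coord X (inord i) a).
  rewrite ev {1}(coord_span aX); apply: eq_bigr => i _.
  by rewrite coef_poly ltn_ord inord_val -tnth_nth tnth_mktuple.
move=> q; rewrite ev dvdX; split.
  exact: indep (fun i => q`_i).
by move=> h; rewrite big1 // => i _; rewrite h ?scale0r.
Qed.
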